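(* Let $\delta\in(0,1)$ and let $G$ be the three-vertex star (path on three vertices) with vertex set $V=\{S,R,W\}$, where the roles of sender $S$, receiver $R$ and the single witness $W$ are assigned to the three vertices in any of the possible ways, and let $\mathcal H=\{\{i,j\}:\{i,j\}\in E(G)\}$. Then the effective bias of the conference $V$ with witness set $\{W\}$ equals $$b_{\mathrm{eff}}=\frac{b^S_R+b^S_W+b^W_R}{2}=\delta+\delta^2,$$ for every assignment of roles. Consequently $N(\delta+\delta^2)\le N(\delta)$ and $N(\delta+\delta^2)\le N(\delta+\tfrac23\delta^2)$: the presence of the witness weakly reduces the number of equilibrium partitions relative to a two-player bias $\delta$ and relative to the private-conversation bias $\delta+\tfrac23\delta^2$.
   Context: For a finite simple undirected graph $G=(V,E)$ and $\delta\in(0,1)$: $v^G(S):=\sum_{i\in S}\sum_{j\in S,\,j\neq i}\delta^{t_{ij}(G[S])}$ for $S\subseteq V$, where $t_{ij}(G[S])$ is the distance in the induced subgraph ($\infty$ if disconnected, $\delta^\infty:=0$). For a conference structure $\mathcal H$ and $C\subseteq V$, $C/\mathcal H$ is the partition of $C$ into classes connected via chains of pairwise-intersecting members of $\mathcal H$ contained in $C$; $r^{v^G}_{\mathcal H}(C):=\sum_{B\in C/\mathcal H}v^G(B)$; for $X\subseteq V$, $\mathcal H|_X:=\{H\in\mathcal H:H\subseteq X\}$. $\mu_j(X;u)$ denotes the Shapley value of player $j$ in the TU game $u$ on player set $X$. Bargaining-power components: $b^j_i:=\mu_j(V;r^{v^G}_{\mathcal H})-\mu_j(V\setminus\{i\};r^{v^G}_{\mathcal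 H|_{V\setminus\{i\}}})$. Effective bias with sender $S$, receiver $R$, witness set $W$: $b_{\mathrm{eff}}:=\bigl(b^S_R+\sum_{w\in W}(b^S_w+b^w_R)\bigr)/(|W|+1)$. For $b>0$, $N(b)$ denotes the unique integer $N\ge1$ with $\beta(N)\le b<\beta(N-1)$, where $\beta(N)=\frac1{2N(N+1)}$ and $\beta(0)=+\infty$ (the number of intervals of the Pareto-superior Crawford–Sobel partition equilibrium with bias $b$); $N$ is non-increasing in $b$. *)

(* Defs.v *)
From mathcomp Require Import all_boot all_order all_algebra.
Set Implicit Arguments. Unset Strict Implicit. Unset Printing Implicit Defensive.
Import Order.TTheory GRing.Theory Num.Theory.
Local Open Scope ring_scope.

Section Defs.
Variable T : finType.

Fixpoint nball (e : rel T) (S : {set T}) (i : T) (k : nat) : {set T} :=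
  match k with
  | 0 => [set x in S | x == i]
  | k'.+1 => let B := nball e S i k' in
             B :|: [set y in S | [exists x in B, e x y]]
  end.

(* distance t_ij(G[S]); None = infinity (disconnected) *)
Definition dist (e : rel T) (S : {set T}) (i j : T) : option nat :=
  let k := find (fun k => j \in nball e S i k) (iota 0 #|T|) in
  if (k < #|T|)%N then Some k else None.

Variable R : realFieldType.

Definition dpow (d : R) (o : option nat) : R :=
  if o is Some k then d ^+ k else 0.

Definition vG (e : rel T) (d : R) (S : {set T}) : R :=
  \sum_(i in S) \sum_(j in S | j != i) dpow d (dist e S i j).

Definition hrel (Hs : {set {set T}}) (C : {set T}) : rel T :=
  fun x y => [exists H0 in Hs, [&& H0 \subset C, x \in H0 & y \in H0]].

Definition classes (Hs : {set {set T}}) (C : {set T}) : {set {set T}} :=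
  [set [set y in C | connect (hrel Hs C) x y] | x in C].

Definition rgame (v : {set T} -> R) (Hs : {set {set T}}) (C : {set T}) : R :=
  \sum_(B in classes Hs C) v B.

Definition restrH (Hs : {set {set T}}) (X : {set T}) : {set {set T}} :=
  [set H0 in Hs | H0 \subset X].

Definition shapley (X : {set T}) (u : {set T} -> R) (j : T) : R :=
  \sum_(S in powerset (X :\ j))
     ((#|S|`! * (#|X| - #|S| - 1)`!)%:R / (#|X|`!)%:R) * (u (j |: S) - u S).

Definition bpow (e : rel T) (d : R) (Hs : {set {set T}}) (j i : T) : R :=
  shapley [set: T] (rgame (vG e d) Hs) j
  - shapley ([set: T] :\ i) (rgame (vG e d) (restrH Hs ([set: T] :\ i))) j.

Definition beff (e : rel T) (d : R) (Hs : {set {set T}}) (S Rc : T) (W : {set T}) : R :=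
  (bpow e d Hs S Rc + \sum_(w in W) (bpow e d Hs S w + bpow e d Hs w Rc))
  / (#|W|.+1)%:R.

End Defs.

Definition beta (R : realFieldType) (N : nat) : R := 1 / (2 * N%:R * (N.+1)%:R).

(* N = N(b): the unique N >= 1 with beta(N) <= b < beta(N-1), beta(0) = +oo *)
Definition is_CS_N (R : realFieldType) (b : R) (N : nat) : Prop :=
  (1 <= N)%N /\ beta R N <= b /\ (N = 1%N \/ b < beta R N.-1).

(* path on three vertices 0 - 1 - 2 *)
Definition path3 : rel 'I_3 :=
  fun x y => ((val x == 1%N) && (val y != 1%N)) || ((val y == 1%N) && (val x != 1%N)).

Definition H3 : {set {set 'I_3}} :=
  [set B : {set 'I_3} | [exists x : 'I_3, [exists y : 'I_3, path3 x y && (B == [set x; y])]]].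

(* Main.v *)
Require Import Defs.
From mathcomp Require Import all_boot all_order all_algebra.
From mathcomp Require Import ring lra zify.
Set Implicit Arguments. Unset Strict Implicit. Unset Printing Implicit Defensive.
Import Order.TTheory GRing.Theory Num.Theory.
Local Open Scope ring_scope.

Definition oa : 'I_3 := @Ordinal 3 0 isT.
Definition ob : 'I_3 := @Ordinal 3 1 isT.
Definition oc : 'I_3 := @Ordinal 3 2 isT.
Definition mk (p q r : bool) : {set 'I_3} :=
  [set x | if x == oa then p else if x == ob then q else r].

Lemma in_mk x p q r : (x \in mk p q r) = (if x == oa then p else if x == ob then q else r).
Proof. by rewrite inE. Qed.

Lemma ord3P (P : 'I_3 -> Prop) : P oa -> P ob -> P oc -> forall x, P x.
Proof.
move=> Pa Pb Pc [[|[|[|//]]] H].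
- by rewrite (_ : Ordinal H = oa) //; apply: val_inj.
- by rewrite (_ : Ordinal H = ob) //; apply: val_inj.
- by rewrite (_ : Ordinal H = oc) //; apply: val_inj.
Qed.

Lemma ex3 (P : pred 'I_3) : [exists x, P x] = [|| P oa, P ob | P oc].
Proof.
apply/existsP/or3P => [[x]|].
  by elim/ord3P: x => H; [constructor 1|constructor 2|constructor 3].
by case => H; [exists oa|exists ob|exists oc].
Qed.

Lemma nball0_in (T : finType) (e : rel T) (S : {set T}) (i j : T) : (j \in nball e S i 0) = (j \in S) && (j == i).
Proof. by rewrite /= inE. Qed.
Lemma nballS_in (T : finType) (e : rel T) (S : {set T}) (i j : T) k : (j \in nball e S i k.+1) =
  (j \in nball e S i k) || ((j \in S) && [exists x, (x \in nball e S i k) && e x j]).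
Proof. by rewrite /= !inE. Qed.

Lemma distE (e : rel 'I_3) (S : {set 'I_3}) (i j : 'I_3) : dist e S i j =
  if j \in nball e S i 0 then Some 0%N else if j \in nball e S i 1 then Some 1%N
  else if j \in nball e S i 2 then Some 2%N else None.
Proof.
rewrite /dist card_ord /=.
by case: (j \in nball e S i 0); case: (j \in nball e S i 1); case: (j \in nball e S i 2).
Qed.

Arguments nball : simpl never.

Lemma sum3 (R : realFieldType) (G : 'I_3 -> R) : \sum_i G i = G oa + G ob + G oc.
Proof. rewrite !big_ord_recl big_ord0 addr0 addrA. by congr (G _ + G _ + G _); apply: val_inj. Qed.

Ltac dsimp := rewrite ?distE; do 3 rewrite ?nballS_in ?nball0_in ?ex3; rewrite ?in_mk /=.

Lemma sum3c (R : realFieldType) (P : pred 'I_3) (G : 'I_3 -> R) : \sum_(i | P i) G i =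
  (if P oa then G oa else 0) + (if P ob then G ob else 0) + (if P oc then G oc else 0).
Proof. by rewrite big_mkcond sum3. Qed.

Lemma mkE (S : {set 'I_3}) : S = mk (oa \in S) (ob \in S) (oc \in S).
Proof. by apply/setP; elim/ord3P; rewrite in_mk. Qed.

Definition dtab (S : {set 'I_3}) (i j : 'I_3) : option nat :=
  if (i \in S) && (j \in S) then
    (if i == j then Some 0%N else if (i == ob) || (j == ob) then Some 1%N
     else if ob \in S then Some 2%N else None)
  else None.

Lemma dist3 S i j : dist path3 S i j = dtab S i j.
Proof.
rewrite (mkE S) /dtab; case: (oa \in S); case: (ob \in S); case: (oc \in S);
elim/ord3P: i; elim/ord3P: j; dsimp; done.
Qed.

Lemma vG_mk (R : realFieldType) (d : R) p q r : vG path3 d (mk p q r) =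
  if p && q && r then 4 * d + 2 * d ^+ 2 else if q && (p || r) then 2 * d else 0.
Proof.
Time (case: p; case: q; case: r; rewrite /vG !sum3c !dist3 /dtab !in_mk /=; rewrite /dpow /=; ring).
Qed.

Lemma mk_eq p q r p' q' r' : (mk p q r == mk p' q' r') = [&& p == p', q == q' & r == r'].
Proof.
apply/eqP/and3P => [h|[/eqP-> /eqP-> /eqP->]] //.
by split; apply/eqP; [move/setP: h => /(_ oa)|move/setP: h => /(_ ob)|move/setP: h => /(_ oc)];
  rewrite !in_mk.
Qed.

Definition s8 := [:: mk true true true; mk true true false; mk true false true; mk true false false;
  mk false true true; mk false true false; mk false false true; mk false false false].

Lemma sum_sets (R : realFieldType) (P : pred {set 'I_3}) (F : {set 'I_3} -> R) :
  \sum_(S | P S) F S = \sum_(S <- s8) (if P S then F S else 0).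
Proof.
rewrite big_mkcond; apply: perm_big.
apply: uniq_perm; first exact: index_enum_uniq.
  by rewrite /s8 /= !in_cons !mk_eq /=.
move=> S; rewrite mem_index_enum (mkE S) /s8 !in_cons !mk_eq.
by case: (oa \in S); case: (ob \in S); case: (oc \in S).
Qed.

Lemma sub3 (A B : {set 'I_3}) : (A \subset B) =
  [&& (oa \in A) ==> (oa \in B), (ob \in A) ==> (ob \in B) & (oc \in A) ==> (oc \in B)].
Proof.
apply/subsetP/and3P => [h|[/implyP ha /implyP hb /implyP hc]].
  by split; apply/implyP; apply: h.
by elim/ord3P.
Qed.

Lemma setU1_mk p q r j : j |: mk p q r = mk (p || (j == oa)) (q || (j == ob)) (r || (j == oc)).
Proof. by apply/setP; elim/ord3P; rewrite in_setU1 !in_mk; elim/ord3P: j; case: p; case: q; case: r. Qed.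

Lemma setD1_mk p q r j : mk p q r :\ j = mk (p && (j != oa)) (q && (j != ob)) (r && (j != oc)).
Proof. by apply/setP; elim/ord3P; rewrite in_setD1 !in_mk; elim/ord3P: j; case: p; case: q; case: r. Qed.

Lemma setT_mk : [set: 'I_3] = mk true true true.
Proof. by apply/setP; elim/ord3P; rewrite in_setT in_mk. Qed.

Lemma card_mk p q r : #|mk p q r| = (p + q + r)%N.
Proof.
rewrite -sum1_card big_mkcond /= !big_ord_recl big_ord0 /=.
have -> : (ord0 : 'I_3) = oa by apply: val_inj.
by rewrite !in_mk /=; case: p; case: q; case: r.
Qed.


Section W.
Variable R : realFieldType.
Lemma w30 : (((0`! * (3 - 0 - 1)`!)%:R / (3`!)%:R) : R) = 1/3.
Proof. by rewrite (_ : (0`! * (3 - 0 - 1)`!)%N = 2%N) // (_ : 3`! = 6%N) //; field. Qed.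
Lemma w31 : (((1`! * (3 - 1 - 1)`!)%:R / (3`!)%:R) : R) = 1/6.
Proof. by rewrite (_ : (1`! * (3 - 1 - 1)`!)%N = 1%N) // (_ : 3`! = 6%N) //; field. Qed.
Lemma w32 : (((2`! * (3 - 2 - 1)`!)%:R / (3`!)%:R) : R) = 1/3.
Proof. by rewrite (_ : (2`! * (3 - 2 - 1)`!)%N = 2%N) // (_ : 3`! = 6%N) //; field. Qed.
Lemma w20 : (((0`! * (2 - 0 - 1)`!)%:R / (2`!)%:R) : R) = 1/2.
Proof. by rewrite (_ : (0`! * (2 - 0 - 1)`!)%N = 1%N) // (_ : 2`! = 2%N) //; field. Qed.
Lemma w21 : (((1`! * (2 - 1 - 1)`!)%:R / (2`!)%:R) : R) = 1/2.
Proof. by rewrite (_ : (1`! * (2 - 1 - 1)`!)%N = 1%N) // (_ : 2`! = 2%N) //; field. Qed.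
End W.

Ltac shap := rewrite /shapley setD1_mk /= sum_sets /s8 !big_cons big_nil !powersetE !sub3 !in_mk /=
  !setU1_mk /= !card_mk !vG_mk /= ?w30 ?w31 ?w32 ?w20 ?w21.

Section Main.
Variable R : realFieldType.
Variable d : R.

Lemma sh_ta : shapley (mk true true true) (vG path3 d) oa = d + 2/3 * d^+2.
Proof. shap; by field. Qed.
Lemma sh_tb : shapley (mk true true true) (vG path3 d) ob = 2 * d + 2/3 * d^+2.
Proof. shap; by field. Qed.
Lemma sh_tc : shapley (mk true true true) (vG path3 d) oc = d + 2/3 * d^+2.
Proof. shap; by field. Qed.
Lemma sh_ab : shapley (mk false true true) (vG path3 d) ob = d.
Proof. shap; by field. Qed.
Lemma sh_ac : shapley (mk false true true) (vG path3 d) oc = d.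
Proof. shap; by field. Qed.
Lemma sh_ca : shapley (mk true true false) (vG path3 d) oa = d.
Proof. shap; by field. Qed.
Lemma sh_cb : shapley (mk true true false) (vG path3 d) ob = d.
Proof. shap; by field. Qed.
Lemma sh_ba : shapley (mk true false true) (vG path3 d) oa = 0.
Proof. shap; by field. Qed.
Lemma sh_bc : shapley (mk true false true) (vG path3 d) oc = 0.
Proof. shap; by field. Qed.

Lemma rgame0 (v : {set 'I_3} -> R) (Hs : {set {set 'I_3}}) (C : {set 'I_3}) : (forall B : {set 'I_3}, B \subset C -> v B = 0) -> rgame v Hs C = 0.
Proof.
move=> h; rewrite /rgame big1 // => B /imsetP [x _ ->]; apply: h.
by apply/subsetP => y; rewrite inE => /andP[].
Qed.

Lemma rgame_conn (v : {set 'I_3} -> R) (Hs : {set {set 'I_3}}) (C : {set 'I_3}) x0 : x0 \in C ->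
  (forall x y, x \in C -> y \in C -> connect (hrel Hs C) x y) -> rgame v Hs C = v C.
Proof.
move=> x0C h; rewrite /rgame; suff -> : classes Hs C = [set C] by rewrite big_set1.
apply/setP => B; rewrite inE; apply/imsetP/eqP => [[x xC ->]|->].
  by apply/setP => y; rewrite inE andb_idr // => yC; exact: h.
by exists x0 => //; apply/setP => y; rewrite inE andb_idr // => yC; exact: h.
Qed.

Lemma hrel_edge (Hs : {set {set 'I_3}}) (C : {set 'I_3}) x y : [set x; y] \in Hs -> [set x; y] \subset C -> hrel Hs C x y.
Proof. by move=> h1 h2; apply/existsP; exists [set x; y]; rewrite h1 h2 !inE !eqxx orbT. Qed.

Lemma path3_obr x : path3 x ob = (x != ob).
Proof. by elim/ord3P: x. Qed.
Lemma path3_obl x : path3 ob x = (x != ob).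
Proof. by elim/ord3P: x. Qed.

Lemma vG0 (C B : {set 'I_3}) : ~~ [&& ob \in C & (oa \in C) || (oc \in C)] -> B \subset C ->
  vG path3 d B = 0.
Proof.
rewrite sub3 (mkE B) vG_mk !in_mk /=.
case: (oa \in C); case: (ob \in C); case: (oc \in C);
case: (oa \in B); case: (ob \in B); case: (oc \in B) => //.
Qed.

Lemma rgame_vG (Hs : {set {set 'I_3}}) (C : {set 'I_3}) :
  (forall x y, path3 x y -> x \in C -> y \in C -> [set x; y] \in Hs) ->
  rgame (vG path3 d) Hs C = vG path3 d C.
Proof.
move=> hE; case: (boolP [&& ob \in C & (oa \in C) || (oc \in C)]) => [/andP[bC _]| h].
  apply: (@rgame_conn (vG path3 d) Hs C ob bC) => x y xC yC; apply: (connect_trans (y := ob)).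
    case: (eqVneq x ob) => [->|xb]; first exact: connect0.
    apply: connect1; apply: hrel_edge; first by apply: hE; rewrite ?path3_obr.
    by apply/subsetP => z; rewrite !inE => /orP[]/eqP->.
  case: (eqVneq y ob) => [->|yb]; first exact: connect0.
  apply: connect1; apply: hrel_edge; first by apply: hE; rewrite ?path3_obl.
  by apply/subsetP => z; rewrite !inE => /orP[]/eqP->.
by rewrite rgame0 ?(vG0 h) // => B; exact: vG0.
Qed.

Lemma shapley_eq (X : {set 'I_3}) (u u' : {set 'I_3} -> R) j : j \in X ->
  (forall C : {set 'I_3}, C \subset X -> u C = u' C) -> shapley X u j = shapley X u' j.
Proof.
move=> jX h; apply: eq_bigr => S; rewrite powersetE => sS.
have sX : S \subset X by apply: subset_trans sS (subD1set _ _).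
rewrite !h //; apply/subsetP => z; rewrite in_setU1 => /orP[/eqP->//|]; exact: (subsetP sX).
Qed.

Lemma edge_H3 x y : path3 x y -> [set x; y] \in H3.
Proof. by move=> p; rewrite inE; apply/existsP; exists x; apply/existsP; exists y; rewrite p eqxx. Qed.

Lemma bpowE j i : j != i ->
  bpow path3 d H3 j i = if (j == ob) || (i == ob) then d + 2/3 * d^+2 else 2/3 * d^+2.
Proof.
move=> ji; rewrite /bpow.
have -> : shapley [set: 'I_3] (rgame (vG path3 d) H3) j = shapley [set: 'I_3] (vG path3 d) j.
  apply: shapley_eq; first by rewrite in_setT.
  by move=> C _; apply: rgame_vG => x y p _ _; exact: edge_H3.
have -> : shapley ([set: 'I_3] :\ i) (rgame (vG path3 d) (restrH H3 ([set: 'I_3] :\ i))) j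
   = shapley ([set: 'I_3] :\ i) (vG path3 d) j.
  apply: shapley_eq; first by rewrite in_setD1 ji in_setT.
  move=> C sC; apply: rgame_vG => x y p xC yC; rewrite inE edge_H3 //=.
  by apply/subsetP => z; rewrite in_set2 => /orP[]/eqP->; apply: (subsetP sC).
rewrite setT_mk setD1_mk.
elim/ord3P: j ji; elim/ord3P: i => //= _;
  rewrite ?sh_ta ?sh_tb ?sh_tc ?sh_ab ?sh_ac ?sh_ca ?sh_cb ?sh_ba ?sh_bc; ring.
Qed.
End Main.

Lemma beta_anti (R : realFieldType) m n : (1 <= m)%N -> (m <= n)%N -> beta R n <= beta R m.
Proof.
move=> m1 mn; rewrite /beta !div1r lef_pV2 ?posrE ?mulr_gt0 ?ltr0n //; last by lia.
have h1 : m%:R <= n%:R :> R by rewrite ler_nat.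
have h2 : m.+1%:R <= n.+1%:R :> R by rewrite ler_nat.
have h3 : 0 <= m%:R :> R by rewrite ler0n.
have h4 : 0 <= m.+1%:R :> R by rewrite ler0n.
nra.
Qed.

Lemma N_mono (R : realFieldType) (b1 b2 : R) N1 N2 : b2 <= b1 ->
  is_CS_N b1 N1 -> is_CS_N b2 N2 -> (N1 <= N2)%N.
Proof.
move=> le [N1p [_ h1]] [N2p [h2 _]].
case: h1 => [-> //| lt1].
rewrite leqNgt; apply/negP => lt.
have le' : (N2 <= N1.-1)%N by rewrite -ltnS prednK.
have hb := beta_anti R N2p le'.
have : b1 < b1 by apply: (lt_le_trans lt1); apply: (le_trans hb); apply: (le_trans h2).
by rewrite ltxx.
Qed.

Theorem proposition2 (R : realFieldType) (d : R) :
  0 < d -> d < 1 ->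
  (forall S Rc W : 'I_3, S != Rc -> S != W -> Rc != W ->
     beff path3 d H3 S Rc [set W]
       = (bpow path3 d H3 S Rc + bpow path3 d H3 S W + bpow path3 d H3 W Rc) / 2
     /\ beff path3 d H3 S Rc [set W] = d + d ^+ 2)
  /\ (forall N1 N2 : nat, is_CS_N (d + d ^+ 2) N1 -> is_CS_N d N2 -> (N1 <= N2)%N)
  /\ (forall N1 N3 : nat, is_CS_N (d + d ^+ 2) N1 ->
        is_CS_N (d + 2 / 3 * d ^+ 2) N3 -> (N1 <= N3)%N).
Proof.
move=> d0 d1; have d2 : 0 <= d ^+ 2 by rewrite exprn_ge0 // ltW.
split; last split.
- move=> S Rc W sr sw rw.
  have e1 : beff path3 d H3 S Rc [set W]
       = (bpow path3 d H3 S Rc + bpow path3 d H3 S W + bpow path3 d H3 W Rc) / 2.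
    by rewrite /beff big_set1 cards1 addrA.
  split => //; rewrite e1 !bpowE // 1?eq_sym //; clear e1.
  move: sr sw rw; elim/ord3P: S; elim/ord3P: Rc; elim/ord3P: W => //= _ _ _; by field.
- move=> N1 N2; apply: N_mono; lra.
- move=> N1 N3; apply: N_mono; lra.
Qed.
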